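(* For any $f : X \to \mathbb{R}$, Player II has a winning strategy in $\Gamma(f)$ if and only if $f$ is a limsup function.
   Context: Let $A$ be a non-empty countable set and $T$ a pruned tree on $A$ (a set of finite sequences of elements of $A$, closed under initial segments, in which every sequence has a proper extension in $T$). Let $X$ be the set of infinite branches of $T$, with the topology generated by the cylinder sets $O(s) = \{x \in X : s \text{ is an initial segment of } x\}$, $s \in T$. A function $f : X \to \mathbb{R}$ is a limsup function if there exists $u : T \to \mathbb{R}$ with $f(x) = \limsup_{t\to\infty} u(x_0,\dots,x_t)$ for every $x \in X$. The game $\Gamma(f)$: Player I and Player II alternate, Player I moving first; Player I plays $x_0, x_1, \dots \in A$ subject to $(x_0,\dots,x_t) \in T$ for all $t$, and after each move $x_t$ Player II plays a real number $v_t$ (both players see all previous moves). Player II wins the run $(x_0,v_0,x_1,v_1,\dots)$ iff $f(x_0,x_1,\dots) = \limsup_{t\to\infty} v_t$; otherwise Player I wins. *)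

(* Defs.v *)
From Stdlib Require Import Reals List.
From Coquelicot Require Import Coquelicot.
Import ListNotations.
Open Scope R_scope.

(* Finite sequences over A are lists, (x_0,...,x_t) = [x_0; ...; x_t]. *)

Definition countable_set (A : Type) : Prop :=
  exists g : A -> nat, forall a b, g a = g b -> a = b.

Definition is_tree {A : Type} (T : list A -> Prop) : Prop :=
  forall s t : list A, T (s ++ t) -> T s.

Definition pruned {A : Type} (T : list A -> Prop) : Prop :=
  forall s : list A, T s -> exists t : list A, t <> [] /\ T (s ++ t).

Definition prefix {A : Type} (x : nat -> A) (n : nat) : list A :=
  map x (seq 0 n).

Definition is_branch {A : Type} (T : list A -> Prop) (x : nat -> A) : Prop :=
  forall n : nat, T (prefix x n).

Definition branches {A : Type} (T : list A -> Prop) : Type :=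
  { x : nat -> A | is_branch T x }.

Definition limsup_function {A : Type} (T : list A -> Prop)
  (f : branches T -> R) : Prop :=
  exists u : list A -> R, forall x : branches T,
    LimSup_seq (fun t => u (prefix (proj1_sig x) (S t))) = Finite (f x).

(* A strategy of Player II: given the history (x_0,v_0,...,x_{t-1},v_{t-1})
   and Player I's current move x_t, it returns v_t. *)
Definition strategyII (A : Type) : Type := list (A * R) -> A -> R.

Fixpoint play_hist {A : Type} (sigma : strategyII A) (x : nat -> A) (t : nat)
  : list (A * R) :=
  match t with
  | O => []
  | S t' => let h := play_hist sigma x t' in h ++ [(x t', sigma h (x t'))]
  end.

Definition moveII {A : Type} (sigma : strategyII A) (x : nat -> A) (t : nat) : R :=
  sigma (play_hist sigma x t) (x t).

Definition winning_II {A : Type} (T : list A -> Prop) (f : branches T -> R)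
  (sigma : strategyII A) : Prop :=
  forall x : branches T,
    LimSup_seq (moveII sigma (proj1_sig x)) = Finite (f x).

Definition II_has_winning_strategy {A : Type} (T : list A -> Prop)
  (f : branches T -> R) : Prop :=
  exists sigma : strategyII A, winning_II T f sigma.

(* Main.v *)
Require Import Defs.
From Stdlib Require Import Reals List Lia FunctionalExtensionality.
From Coquelicot Require Import Coquelicot.
Import ListNotations.

Lemma prefix_S {A : Type} (x : nat -> A) t : prefix x (S t) = prefix x t ++ [x t].
Proof. unfold prefix. rewrite seq_S, map_app. reflexivity. Qed.

Lemma play_hist_ext {A : Type} (sigma : strategyII A) (x y : nat -> A) t :
  (forall n, (n < t)%nat -> x n = y n) -> play_hist sigma x t = play_hist sigma y t.
Proof.
  induction t as [|t IH]; intros H; simpl; [reflexivity|].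
  rewrite IH by (intros; apply H; lia). rewrite (H t) by lia. reflexivity.
Qed.

Lemma hist_fst {A : Type} (u : list A -> R) x t :
  map fst (play_hist (fun h a => u (map fst h ++ [a])) x t) = prefix x t.
Proof.
  induction t as [|t IH]; simpl; [reflexivity|].
  rewrite map_app, IH, prefix_S. reflexivity.
Qed.

Lemma nth_prefix {A : Type} (x : nat -> A) t n d : (n < t)%nat -> nth n (prefix x t) d = x n.
Proof.
  intros H. unfold prefix. rewrite nth_indep with (d' := x 0%nat).
  - rewrite map_nth, seq_nth by lia. reflexivity.
  - rewrite length_map, length_seq. lia.
Qed.

Theorem mainTheorem6 (A : Type) (T : list A -> Prop)
  (hne : inhabited A) (hcount : countable_set A)
  (htree : is_tree T) (hpruned : pruned T) (f : branches T -> R) :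
  II_has_winning_strategy T f <-> limsup_function T f.
Proof.
  split.
  - intros [sigma Hs]. destruct hne as [d].
    exists (fun s => moveII sigma (fun n => nth n s d) (length s - 1)).
    intros x. rewrite <- (Hs x). f_equal. apply functional_extensionality. intros t.
    unfold prefix at 2. rewrite length_map, length_seq.
    replace (S t - 1)%nat with t by lia.
    unfold moveII. rewrite (nth_prefix _ (S t) t d) by lia.
    f_equal. apply play_hist_ext. intros n Hn. apply nth_prefix. lia.
  - intros [u Hu]. exists (fun h a => u (map fst h ++ [a])).
    intros x. rewrite <- (Hu x). f_equal. apply functional_extensionality. intros t.
    unfold moveII. rewrite hist_fst, prefix_S. reflexivity.
Qed.
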